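(* Let $m+n\ge 3$ and let $\psi:\mathfrak{stl}(m,n,\mathcal A)\to\mathfrak{sl}(m,n,\mathcal A)$ be the homomorphism with $\psi(v_{ij}(a))=E_{ij}(a)$. Then $\operatorname{Ker}\psi\subseteq H$.
   Context: Standing assumptions: $K$ is a field with $\operatorname{char}K\ne 2,3$, and $\mathcal A$ is an associative unital $K$-algebra. For $1\le i,j\le m+n$ put $\tau_{ij}=0$ if $i,j\le m$ or $i,j\ge m+1$, and $\tau_{ij}=1$ otherwise. A Leibniz superalgebra is a $\mathbb Z_2$-graded $K$-space with a bilinear bracket respecting the grading and satisfying $[[a,b],c]=[a,[b,c]]-(-1)^{|a||b|}[b,[a,c]]$. $\mathfrak{gl}(m,n,\mathcal A)$: $(m+n)\times(m+n)$ matrices over $\mathcal A$, matrix unit $E_{ij}(a)$ of degree $\tau_{ij}$, bracket $[X,Y]=XY-(-1)^{\alpha\beta}YX$. $\mathfrak{sl}(m,n,\mathcal A)$ is the subsuperalgebra generated by the $E_{ij}(a)$, $i\ne j$. $\mathfrak{stl}(m,n,\mathcal A)$ is the Leibniz superalgebra generated by $v_{ij}(a)$, $1\le i\ne j\le m+n$, $a\in\mathcal A$, of degree $\tau_{ij}$, subject to: (1) $K$-linearity in $a$; (2) $[v_{ij}(a),v_{kl}(b)]=0$ if $i\ne l$, $j\ne k$; (3) $[v_{ij}(a),v_{kl}(b)]=v_{il}(ab)$ if $i\ne l$, $j=k$; (4) $[v_{ij}(a),v_{kl}(b)]=-(-1)^{\tau_{ij}\tau_{kl}}v_{kj}(ba)$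 if $i=l$, $j\ne k$. For $i\ne j$, $H_{ij}(a,b)=[v_{ij}(a),v_{ji}(b)]$, and $H$ is the $K$-span of all $H_{ij}(a,b)$. *)

(* Defs.v *)
From HB Require Import structures.
From mathcomp Require Import all_boot all_order all_algebra.
Set Implicit Arguments. Unset Strict Implicit. Unset Printing Implicit Defensive.
Import GRing.Theory.
Local Open Scope ring_scope.

(* Indices 1..m+n of the paper are 0..m+n-1 here (type 'I_(m+n));
   index i (0-based) is "<= m" in the paper iff i < m. *)

Section Steinberg.
Variables (K : fieldType) (A : algType K) (m n : nat).
Local Notation N := (m + n).

Definition tau (i j : 'I_N) : bool := (i < m)%N != (j < m)%N.

Definition ssign (d e : bool) : K := if d && e then -1 else 1.

(* Terms of the free (non-associative) K-algebra on the generators v_ij(a), i<>j *)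
Inductive term : Type :=
| Gen (i j : 'I_N) of i != j & A
| Zero
| Add of term & term
| Scale of K & term
| Br of term & term.

Inductive hdeg : term -> bool -> Prop :=
| hdeg_gen i j (h : i != j) a : hdeg (Gen h a) (tau i j)
| hdeg_zero d : hdeg Zero d
| hdeg_add t s d : hdeg t d -> hdeg s d -> hdeg (Add t s) d
| hdeg_scale c t d : hdeg t d -> hdeg (Scale c t) d
| hdeg_br t s d e : hdeg t d -> hdeg s e -> hdeg (Br t s) (addb d e).

(* Two terms are equal in stl(m,n,A) iff they are related by [eqv]. *)
Inductive eqv : term -> term -> Prop :=
| eqv_refl t : eqv t t
| eqv_sym t s : eqv t s -> eqv s t
| eqv_trans t s u : eqv t s -> eqv s u -> eqv t u
| eqv_add t t' s s' : eqv t t' -> eqv s s' -> eqv (Add t s) (Add t' s')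
| eqv_scale c t t' : eqv t t' -> eqv (Scale c t) (Scale c t')
| eqv_br t t' s s' : eqv t t' -> eqv s s' -> eqv (Br t s) (Br t' s')
| eqv_addA t s u : eqv (Add t (Add s u)) (Add (Add t s) u)
| eqv_addC t s : eqv (Add t s) (Add s t)
| eqv_add0 t : eqv (Add Zero t) t
| eqv_addN t : eqv (Add t (Scale (-1) t)) Zero
| eqv_scaleDr c t s : eqv (Scale c (Add t s)) (Add (Scale c t) (Scale c s))
| eqv_scaleDl c d t : eqv (Scale (c + d) t) (Add (Scale c t) (Scale d t))
| eqv_scaleA c d t : eqv (Scale c (Scale d t)) (Scale (c * d) t)
| eqv_scale1 t : eqv (Scale 1 t) t
| eqv_brDl t s u : eqv (Br (Add t s) u) (Add (Br t u) (Br s u))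
| eqv_brDr t s u : eqv (Br u (Add t s)) (Add (Br u t) (Br u s))
| eqv_brZl c t u : eqv (Br (Scale c t) u) (Scale c (Br t u))
| eqv_brZr c t u : eqv (Br u (Scale c t)) (Scale c (Br u t))
| eqv_leibniz a b c d e f : hdeg a d -> hdeg b e -> hdeg c f ->
    eqv (Br (Br a b) c)
        (Add (Br a (Br b c)) (Scale (- ssign d e) (Br b (Br a c))))
| eqv_genD i j (h : i != j) a b : eqv (Gen h (a + b)) (Add (Gen h a) (Gen h b))
| eqv_genZ i j (h : i != j) c a : eqv (Gen h (c *: a)) (Scale c (Gen h a))
| eqv_rel2 i j k l (hij : i != j) (hkl : k != l) a b :
    i != l -> j != k -> eqv (Br (Gen hij a) (Gen hkl b)) Zero
| eqv_rel3 i j k l (hij : i != j) (hkl : k != l) (hil : i != l) a b :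
    j = k -> eqv (Br (Gen hij a) (Gen hkl b)) (Gen hil (a * b))
| eqv_rel4 i j k l (hij : i != j) (hkl : k != l) (hkj : k != j) a b :
    i = l -> eqv (Br (Gen hij a) (Gen hkl b))
                 (Scale (- ssign (tau i j) (tau k l)) (Gen hkj (b * a))).

Definition Emx (i j : 'I_N) (a : A) : 'M[A]_N :=
  \matrix_(k, l) (if (k == i) && (l == j) then a else 0).

Definition scalemx (c : K) (X : 'M[A]_N) : 'M[A]_N := map_mx (fun x => c *: x) X.

Definition parmx (d : bool) (X : 'M[A]_N) : 'M[A]_N :=
  \matrix_(k, l) (if tau k l == d then X k l else 0).

(* super bracket [X,Y] = XY - (-1)^{|X||Y|} YX, extended bilinearly *)
Definition sbr (X Y : 'M[A]_N) : 'M[A]_N :=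
  \sum_(d : bool) \sum_(e : bool)
     (parmx d X *m parmx e Y - scalemx (ssign d e) (parmx e Y *m parmx d X)).

Fixpoint psi (t : term) : 'M[A]_N :=
  match t with
  | @Gen i j _ a => Emx i j a
  | Zero => 0
  | Add t s => psi t + psi s
  | Scale c t => scalemx c (psi t)
  | Br t s => sbr (psi t) (psi s)
  end.

Inductive inH : term -> Prop :=
| inH_gen i j (hij : i != j) (hji : j != i) a b : inH (Br (Gen hij a) (Gen hji b))
| inH_zero : inH Zero
| inH_add t s : inH t -> inH s -> inH (Add t s)
| inH_scale c t : inH t -> inH (Scale c t).

End Steinberg.

(* Main.v *)
Require Import Defs.
From mathcomp Require Import all_boot all_order all_algebra zify.
Set Implicit Arguments. Unset Strict Implicit. Unset Printing Implicit Defensive.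
Import GRing.Theory.
Local Open Scope ring_scope.

Inductive ex := At of nat | Pl of ex & ex | Ng of ex | Z0.

Section ACsec.
Variable V : zmodType.
Variable env : nat -> V.

Fixpoint ev (e : ex) : V :=
  match e with At j => env j | Pl a b => ev a + ev b | Ng a => - ev a | Z0 => 0 end.

Fixpoint coef (e : ex) (k : nat) : int :=
  match e with At j => ((j == k) : nat)%:Z | Pl a b => coef a k + coef b k
  | Ng a => - coef a k | Z0 => 0 end.

Fixpoint wf (e : ex) : bool :=
  match e with At j => (j < 8)%N | Pl a b => wf a && wf b | Ng a => wf a | Z0 => true end.

Lemma ev_sum e : wf e -> ev e = \sum_(k < 8) env k *~ coef e k.
Proof.
elim: e => [j|a IHa b IHb|a IHa|] /=.
- move=> hj; rewrite (bigD1 (Ordinal hj)) //= eqxx mulr1z big1 ?addr0 // => i.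
  by rewrite eq_sym -(inj_eq val_inj) /= => /negbTE ->; rewrite mulr0z.
- by case/andP=> /IHa -> /IHb ->; rewrite -big_split /=; apply: eq_bigr => i _; rewrite mulrzDr_tmp.
- by move/IHa ->; rewrite -sumrN; apply: eq_bigr => i _; rewrite mulrNz.
- by move=> _; rewrite big1 // => i _; rewrite mulr0z.
Qed.

Lemma ev_eq l r : wf l -> wf r -> all (fun k => coef l k == coef r k) (iota 0 8) -> ev l = ev r.
Proof.
move=> wl wr /allP h; rewrite !ev_sum //; apply: eq_bigr => i _.
by rewrite (eqP (h i _)) // mem_iota /=.
Qed.
End ACsec.



Ltac reifyL s t :=
  lazymatch t with
  | (?a + ?b)%R => let ra := reifyL s a in let rb := reifyL s b in constr:(Pl ra rb)
  | (- ?a)%R => let ra := reifyL s a in constr:(Ng ra)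
  | 0%R => constr:(Z0)
  | _ => let j := find_idx s t 0%N in constr:(At j)
  end
with find_idx s t i :=
  lazymatch s with
  | (?x :: ?s') => match tt with
                   | _ => let _ := match goal with _ => unify x t end in i
                   | _ => find_idx s' t (S i)
                   end
  end.

Ltac acsolve s :=
  lazymatch goal with |- ?L = ?R =>
    let l := reifyL s L in let r := reifyL s R in
    change (ev (nth 0 s) l = ev (nth 0 s) r); apply: ev_eq; vm_compute; reflexivity
  end.

Section Mx.
Variables (K : fieldType) (A : algType K) (m n : nat).
Local Notation N := (m + n).
Local Notation M := ('M[A]_N).
Local Notation sc := (@Defs.scalemx K A m n).
Local Notation pm := (@Defs.parmx K A m n).
Local Notation br := (@Defs.sbr K A m n).
Local Notation tau := (@Defs.tau m n).

Lemma tauC (i j : 'I_N) : tau i j = tau j i.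
Proof. by rewrite /Defs.tau eq_sym. Qed.

Lemma tau_tr (i j k : 'I_N) : tau i k = addb (tau i j) (tau j k).
Proof. rewrite /Defs.tau; by case: (i < m)%N; case: (j < m)%N; case: (k < m)%N. Qed.

Lemma ssignC d e : ssign K d e = ssign K e d.
Proof. by rewrite /ssign andbC. Qed.

Lemma scalemxE (c : K) (X : M) k l : sc c X k l = c *: X k l.
Proof. by rewrite /Defs.scalemx mxE. Qed.

Lemma scalemxD (c : K) (X Y : M) : sc c (X + Y) = sc c X + sc c Y.
Proof. by apply/matrixP=> k l; rewrite !(mxE, scalemxE) scalerDr. Qed.

Lemma scalemxDl (c d : K) (X : M) : sc (c + d) X = sc c X + sc d X.
Proof. by apply/matrixP=> k l; rewrite !(mxE, scalemxE) scalerDl. Qed.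

Lemma scalemxA (c d : K) (X : M) : sc c (sc d X) = sc (c * d) X.
Proof. by apply/matrixP=> k l; rewrite !(mxE, scalemxE) scalerA. Qed.

Lemma scalemx1 (X : M) : sc 1 X = X.
Proof. by apply/matrixP=> k l; rewrite !(mxE, scalemxE) scale1r. Qed.

Lemma scalemxN1 (X : M) : sc (-1) X = - X.
Proof. by apply/matrixP=> k l; rewrite !(mxE, scalemxE) scaleN1r. Qed.

Lemma scalemx0 (c : K) : sc c 0 = 0.
Proof. by apply/matrixP=> k l; rewrite !(mxE, scalemxE) scaler0. Qed.

Lemma scalemxN (c : K) (X : M) : sc c (- X) = - sc c X.
Proof. by apply/matrixP=> k l; rewrite !(mxE, scalemxE) scalerN. Qed.

Lemma scalemxNl (c : K) (X : M) : sc (- c) X = - sc c X.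
Proof. by apply/matrixP=> k l; rewrite !(mxE, scalemxE) scaleNr. Qed.

Lemma scalemxB (c : K) (X Y : M) : sc c (X - Y) = sc c X - sc c Y.
Proof. by rewrite scalemxD scalemxN. Qed.

Lemma scalemx_sum (c : K) I (r : seq I) (F : I -> M) :
  sc c (\sum_(i <- r) F i) = \sum_(i <- r) sc c (F i).
Proof.
elim: r => [|x r IH]; first by rewrite !big_nil scalemx0.
by rewrite !big_cons scalemxD IH.
Qed.

Lemma mulmx_scalel (c : K) (X Y : M) : sc c X *m Y = sc c (X *m Y).
Proof.
apply/matrixP=> k l; rewrite !(mxE, scalemxE) scaler_sumr; apply: eq_bigr => r _.
by rewrite scalemxE scalerAl.
Qed.

Lemma mulmx_scaler (c : K) (X Y : M) : X *m sc c Y = sc c (X *m Y).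
Proof.
apply/matrixP=> k l; rewrite !(mxE, scalemxE) scaler_sumr; apply: eq_bigr => r _.
by rewrite scalemxE scalerAr.
Qed.

Lemma parmxD d (X Y : M) : pm d (X + Y) = pm d X + pm d Y.
Proof. by apply/matrixP=> k l; rewrite !mxE; case: ifP; rewrite ?addr0. Qed.

Lemma parmxZ d (c : K) (X : M) : pm d (sc c X) = sc c (pm d X).
Proof. by apply/matrixP=> k l; rewrite !(mxE, scalemxE); case: ifP; rewrite ?scaler0. Qed.

Lemma sbrDl (X Y Z : M) : br (X + Y) Z = sbr X Z + sbr Y Z.
Proof.
rewrite /Defs.sbr -big_split /=; apply: eq_bigr => d _.
rewrite -big_split /=; apply: eq_bigr => e _.
rewrite parmxD mulmxDl mulmxDr scalemxD; rewrite opprD.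
by rewrite !addrA; congr (_ + _); rewrite -!addrA; congr (_ + _); rewrite addrC.
Qed.

Lemma sbrDr (X Y Z : M) : sbr Z (X + Y) = sbr Z X + sbr Z Y.
Proof.
rewrite /Defs.sbr -big_split /=; apply: eq_bigr => d _.
rewrite -big_split /=; apply: eq_bigr => e _.
rewrite parmxD mulmxDl mulmxDr scalemxD; rewrite opprD.
by rewrite !addrA; congr (_ + _); rewrite -!addrA; congr (_ + _); rewrite addrC.
Qed.

Lemma sbrZl (c : K) (X Y : M) : br (sc c X) Y = sc c (sbr X Y).
Proof.
rewrite /Defs.sbr scalemx_sum; apply: eq_bigr => d _.
rewrite scalemx_sum; apply: eq_bigr => e _.
rewrite parmxZ mulmx_scalel mulmx_scaler scalemxB !scalemxA mulrC //.
Qed.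

Lemma sbrZr (c : K) (X Y : M) : sbr Y (sc c X) = sc c (sbr Y X).
Proof.
rewrite /Defs.sbr scalemx_sum; apply: eq_bigr => d _.
rewrite scalemx_sum; apply: eq_bigr => e _.
rewrite parmxZ mulmx_scalel mulmx_scaler scalemxB !scalemxA mulrC //.
Qed.

End Mx.

Section Homog.
Variables (K : fieldType) (A : algType K) (m n : nat).
Local Notation N := (m + n).
Local Notation M := ('M[A]_N).
Local Notation sc := (@Defs.scalemx K A m n).
Local Notation pm := (@Defs.parmx K A m n).
Local Notation br := (@Defs.sbr K A m n).
Local Notation tau := (@Defs.tau m n).
Local Notation Emx := (@Defs.Emx K A m n).

Definition homog (d : bool) (X : M) := forall k l, tau k l != d -> X k l = 0.

Lemma pm_homog d e X : homog d X -> pm e X = if e == d then X else 0.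
Proof.
move=> h; apply/matrixP=> k l; rewrite !mxE.
case: (eqVneq e d) => [->|ne].
  by case: eqP => // /eqP ne; rewrite h.
case: eqP => [te|]; last by rewrite mxE.
by rewrite h ?mxE // te.
Qed.

Lemma sbrE d e X Y : homog d X -> homog e Y ->
  br X Y = X *m Y - sc (ssign K d e) (Y *m X).
Proof.
move=> hX hY; rewrite /Defs.sbr !big_bool /=.
rewrite !(pm_homog _ hX) !(pm_homog _ hY).
by case: d {hX}; case: e {hY} => /=;
   rewrite ?mul0mx ?mulmx0 ?scalemx0 ?subr0 ?add0r ?addr0.
Qed.

Lemma homog0 d : homog d 0.
Proof. by move=> k l _; rewrite mxE. Qed.

Lemma homogD d X Y : homog d X -> homog d Y -> homog d (X + Y).
Proof. by move=> hX hY k l h; rewrite mxE hX ?hY ?addr0. Qed.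

Lemma homogN d X : homog d X -> homog d (- X).
Proof. by move=> hX k l h; rewrite mxE hX ?oppr0. Qed.

Lemma homogZ d c X : homog d X -> homog d (sc c X).
Proof. by move=> hX k l h; rewrite scalemxE hX ?scaler0. Qed.

Lemma homogM d e X Y : homog d X -> homog e Y -> homog (addb d e) (X *m Y).
Proof.
move=> hX hY k l h; rewrite mxE big1 // => r _.
case: (eqVneq (tau k r) d) => [hd|hd]; last by rewrite hX ?mul0r.
case: (eqVneq (tau r l) e) => [he|he]; last by rewrite hY ?mulr0.
by move: h; rewrite (tau_tr k r l) hd he eqxx.
Qed.

Lemma homog_br d e X Y : homog d X -> homog e Y -> homog (addb d e) (br X Y).
Proof.
move=> hX hY; rewrite (sbrE hX hY); apply: homogD; first exact: homogM.
by apply/homogN/homogZ; rewrite addbC; apply: homogM.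
Qed.

Lemma homog_Emx i j a : homog (tau i j) (Emx i j a).
Proof.
move=> k l; rewrite mxE; case: ifP => // /andP[/eqP -> /eqP ->].
by rewrite eqxx.
Qed.

Lemma leibniz_mx d e f X Y Z : homog d X -> homog e Y -> homog f Z ->
  br (br X Y) Z = br X (br Y Z) + sc (- ssign K d e) (br Y (br X Z)).
Proof.
move=> hX hY hZ.
have hXY := homog_br hX hY; have hYZ := homog_br hY hZ; have hXZ := homog_br hX hZ.
rewrite (sbrE hXY hZ) (sbrE hX hYZ) (sbrE hY hXZ) (sbrE hX hY) (sbrE hY hZ) (sbrE hX hZ).
clear hX hY hZ hXY hYZ hXZ.
case: d; case: e; case: f;
  rewrite /ssign /= ?opprK ?scalemx1 ?scalemxN1 ?scalemxN ?opprK ?scalemx1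
  !(mulmxDl, mulmxDr, mulmxN, mulNmx, mulmxA, opprD, opprK);
  acsolve [:: X *m Y *m Z; X *m Z *m Y; Y *m X *m Z; Y *m Z *m X; Z *m X *m Y; Z *m Y *m X].
Qed.

End Homog.

Section Psi.
Variables (K : fieldType) (A : algType K) (m n : nat).
Local Notation N := (m + n).
Local Notation M := ('M[A]_N).
Local Notation sc := (@Defs.scalemx K A m n).
Local Notation br := (@Defs.sbr K A m n).
Local Notation tau := (@Defs.tau m n).
Local Notation Emx := (@Defs.Emx K A m n).
Local Notation term := (@Defs.term K A m n).

Lemma EmxD i j a b : Emx i j (a + b) = Emx i j a + Emx i j b.
Proof. by apply/matrixP=> k l; rewrite !mxE; case: ifP; rewrite ?addr0. Qed.

Lemma EmxZ i j (c : K) a : Emx i j (c *: a) = sc c (Emx i j a).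
Proof. by apply/matrixP=> k l; rewrite scalemxE !mxE; case: ifP; rewrite ?scaler0. Qed.

Lemma EmxM i j k l a b :
  Emx i j a *m Emx k l b = if j == k then Emx i l (a * b) else 0.
Proof.
apply/matrixP=> p q; rewrite !mxE (bigD1 j) //= big1 ?addr0; last first.
  by move=> r /negbTE hr; rewrite !mxE hr andbF mul0r.
rewrite !mxE eqxx andbT.
case: (eqVneq j k) => [ejk|hjk]; last first.
  by rewrite /= ?mxE mulr0.
subst k; rewrite /= mxE.
by case: (p == i); case: (q == l); rewrite /= ?mul0r ?mulr0.
Qed.

Lemma psi_homog (t : term) d : hdeg t d -> homog d (psi t).
Proof.
elim=> /= {t d}.
- move=> i j h a; exact: homog_Emx.
- move=> d; exact: homog0.
- by move=> t s d _ h1 _ h2; apply: homogD.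
- by move=> c t d _ h; apply: homogZ.
- by move=> t s d e _ h1 _ h2; apply: homog_br.
Qed.

Lemma psi_eqv (t s : term) : eqv t s -> psi t = psi s.
Proof.
elim=> {t s} /=.
- by [].
- by move=> t s _ ->.
- by move=> t s u _ -> _ ->.
- by move=> t t' s s' _ -> _ ->.
- by move=> c t t' _ ->.
- by move=> t t' s s' _ -> _ ->.
- by move=> t s u; exact: addrA.
- by move=> t s; exact: addrC.
- by move=> t; exact: add0r.
- by move=> t; rewrite scalemxN1 subrr.
- by move=> c t s; rewrite scalemxD.
- by move=> c d t; rewrite scalemxDl.
- by move=> c d t; rewrite scalemxA.
- by move=> t; rewrite scalemx1.
- by move=> t s u; rewrite sbrDl.
- by move=> t s u; rewrite sbrDr.
- by move=> c t u; rewrite sbrZl.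
- by move=> c t u; rewrite sbrZr.
- move=> a b c d e f ha hb hc.
  exact: (leibniz_mx (psi_homog ha) (psi_homog hb) (psi_homog hc)).
- by move=> i j h a b; rewrite EmxD.
- by move=> i j h c a; rewrite EmxZ.
- move=> i j k l hij hkl a b hil hjk.
  rewrite (sbrE (@homog_Emx _ _ _ _ i j a) (@homog_Emx _ _ _ _ k l b)) !EmxM.
  by rewrite (negbTE hjk) eq_sym (negbTE hil) scalemx0 subrr.
- move=> i j k l hij hkl hil a b ejk.
  rewrite (sbrE (@homog_Emx _ _ _ _ i j a) (@homog_Emx _ _ _ _ k l b)) !EmxM.
  subst k; rewrite eqxx.
  by rewrite eq_sym (negbTE hil) scalemx0 subr0.
- move=> i j k l hij hkl hkj a b eil.
  rewrite (sbrE (@homog_Emx _ _ _ _ i j a) (@homog_Emx _ _ _ _ k l b)) !EmxM.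
  subst l; rewrite eqxx.
  by rewrite eq_sym (negbTE hkj) sub0r scalemxNl.
Qed.

End Psi.

Section Terms.
Variables (K : fieldType) (A : algType K) (m n : nat).
Local Notation N := (m + n).
Local Notation term := (@Defs.term K A m n).
Local Notation eqv := (@Defs.eqv K A m n).
Local Notation tau := (@Defs.tau m n).
Local Notation Gen := (@Defs.Gen K A m n).
Local Notation Zero := (@Defs.Zero K A m n).

Implicit Types t s u : term.

Lemma eqv_add0r t : eqv (Add t Zero) t.
Proof. exact: eqv_trans (eqv_addC _ _) (eqv_add0 _). Qed.

Lemma eqv_addl t t' s : eqv t t' -> eqv (Add t s) (Add t' s).
Proof. by move=> h; apply: eqv_add => //; apply: eqv_refl. Qed.

Lemma eqv_addr t s s' : eqv s s' -> eqv (Add t s) (Add t s').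
Proof. by move=> h; apply: eqv_add => //; apply: eqv_refl. Qed.

Lemma eqv_solve L R Z : eqv L (Add R Z) -> eqv R (Add L (Scale (-1) Z)).
Proof.
move=> h.
apply: eqv_trans (eqv_sym (eqv_add0r R)) _.
apply: eqv_trans (eqv_addr _ (eqv_sym (eqv_addN Z))) _.
apply: eqv_trans (eqv_addA _ _ _) _.
by apply: eqv_addl; apply: eqv_sym.
Qed.

Lemma eqv_self0 t : eqv t (Add t t) -> eqv t Zero.
Proof.
move=> h; have := eqv_solve h.
move=> h2; apply: eqv_trans h2 _.
exact: eqv_addN.
Qed.

Lemma eqv_scale0 t : eqv (Scale 0 t) Zero.
Proof.
apply: eqv_self0; have := eqv_scaleDl 0 0 t; by rewrite addr0.
Qed.

Lemma eqv_scaleZ (c : K) : eqv (Scale c Zero) Zero.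
Proof.
apply: eqv_trans (eqv_scale c (eqv_sym (eqv_scale0 Zero))) _.
apply: eqv_trans (eqv_scaleA _ _ _) _; rewrite mulr0; exact: eqv_scale0.
Qed.

Lemma eqv_br0l t : eqv (Br Zero t) Zero.
Proof.
apply: eqv_trans (eqv_br (eqv_sym (eqv_scale0 Zero)) (eqv_refl t)) _.
apply: eqv_trans (eqv_brZl _ _ _) _; exact: eqv_scale0.
Qed.

Lemma eqv_br0r t : eqv (Br t Zero) Zero.
Proof.
apply: eqv_trans (eqv_br (eqv_refl t) (eqv_sym (eqv_scale0 Zero))) _.
apply: eqv_trans (eqv_brZr _ _ _) _; exact: eqv_scale0.
Qed.

Lemma eqv_gen0 i j (h : i != j) : eqv (Gen h 0) Zero.
Proof.
have e := @eqv_genZ K A m n i j h 0 0; rewrite scaler0 in e.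
exact: eqv_trans e (eqv_scale0 _).
Qed.

Lemma eqv_ACA t s u v : eqv (Add (Add t s) (Add u v)) (Add (Add t u) (Add s v)).
Proof.
apply: eqv_trans (eqv_sym (eqv_addA _ _ _)) _.
apply: eqv_trans (eqv_addr _ (eqv_addA _ _ _)) _.
apply: eqv_trans (eqv_addr _ (eqv_addl _ (eqv_addC _ _))) _.
apply: eqv_trans (eqv_addr _ (eqv_sym (eqv_addA _ _ _))) _.
exact: eqv_addA.
Qed.

Inductive comb (P : term -> Prop) : term -> Prop :=
| cP t : P t -> comb P t
| cZ : comb P Zero
| cA t s : comb P t -> comb P s -> comb P (Add t s)
| cS c t : comb P t -> comb P (Scale c t).

Definition cl (P : term -> Prop) t := exists c, comb P c /\ eqv t c.

Lemma comb_mono (P Q : term -> Prop) t : (forall g, P g -> Q g) -> comb P t -> comb Q t.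
Proof. move=> h; elim=> *; [apply: cP; exact: h | exact: cZ | exact: cA | exact: cS]. Qed.

Lemma cl_mono (P Q : term -> Prop) t : (forall g, P g -> Q g) -> cl P t -> cl Q t.
Proof. by move=> h [c [hc e]]; exists c; split => //; apply: comb_mono hc. Qed.

Lemma cl_eqv P t s : eqv t s -> cl P s -> cl P t.
Proof. by move=> e [c [hc e']]; exists c; split => //; apply: eqv_trans e e'. Qed.

Lemma cl_P (P : term -> Prop) t : P t -> cl P t.
Proof. by move=> h; exists t; split; [apply: cP | apply: eqv_refl]. Qed.

Lemma cl_Z P : cl P Zero.
Proof. by exists Zero; split; [apply: cZ | apply: eqv_refl]. Qed.

Lemma cl_A P t s : cl P t -> cl P s -> cl P (Add t s).
Proof.
by move=> [c [hc e]] [d [hd e']]; exists (Add c d); split; [apply: cA | apply: eqv_add].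
Qed.

Lemma cl_S P (c : K) t : cl P t -> cl P (Scale c t).
Proof. by move=> [d [hd e]]; exists (Scale c d); split; [apply: cS | apply: eqv_scale]. Qed.

Lemma cl_comb P t : comb (cl P) t -> cl P t.
Proof. elim=> *; [by [] | exact: cl_Z | exact: cl_A | exact: cl_S]. Qed.

Lemma br_comb (P Q R : term -> Prop) t s :
  (forall x y, P x -> Q y -> cl R (Br x y)) -> comb P t -> comb Q s -> cl R (Br t s).
Proof.
move=> h ht hs; elim: ht => {t}.
- move=> t Pt; elim: hs => {s}.
  + by move=> s Qs; apply: h.
  + by apply: cl_eqv (eqv_br0r _) (cl_Z _).
  + by move=> s1 s2 _ h1 _ h2; apply: cl_eqv (eqv_brDr _ _ _) (cl_A h1 h2).
  + by move=> c s _ h1; apply: cl_eqv (eqv_brZr _ _ _) (cl_S _ h1).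
- by apply: cl_eqv (eqv_br0l _) (cl_Z _).
- by move=> t1 t2 _ h1 _ h2; apply: cl_eqv (eqv_brDl _ _ _) (cl_A h1 h2).
- by move=> c t _ h1; apply: cl_eqv (eqv_brZl _ _ _) (cl_S _ h1).
Qed.

Lemma cl_br (P Q R : term -> Prop) t s :
  (forall x y, P x -> Q y -> cl R (Br x y)) -> cl P t -> cl Q s -> cl R (Br t s).
Proof.
move=> h [c [hc e]] [d [hd e']].
apply: cl_eqv (eqv_br e e') _; exact: br_comb hc hd.
Qed.

End Terms.

Lemma third N (i j : 'I_N) : (3 <= N)%N -> exists r : 'I_N, r != i /\ r != j.
Proof.
move=> hN.
pose k := if ((0 != i) && (0 != j))%N then 0%N else if ((1 != i) && (1 != j))%N then 1%N else 2%N.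
have hk : ((k < N) && (k != i) && (k != j))%N.
  rewrite /k; case: ifP => h1; first lia.
  case: ifP => h2; lia.
case/andP: hk => /andP [hkN hki] hkj.
exists (Ordinal hkN); split; apply/eqP => e; move: hki hkj; rewrite -e /=; rewrite eqxx //= andbF.
Qed.

Ltac idx := repeat match goal with H : is_true (?x != ?y) |- _ => move/eqP: H => H end;
  repeat match goal with
  | |- ~ _ => intro
  | |- forall _, _ => intro
  | H : _ /\ _ |- _ => destruct H
  | H : _ \/ _ |- _ => destruct H
  | H : ?f ?x ?y |- _ => progress (cbv beta in H)
  end; subst; first [tauto | firstorder congruence].

Section Core.
Variables (K : fieldType) (A : algType K) (m n : nat).
Local Notation N := (m + n).
Local Notation term := (@Defs.term K A m n).
Local Notation eqv := (@Defs.eqv K A m n).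
Local Notation tau := (@Defs.tau m n).
Local Notation Gen := (@Defs.Gen K A m n).
Local Notation Zero := (@Defs.Zero K A m n).
Local Notation cl := (@cl K A m n).

Definition isG (P : 'I_N -> 'I_N -> Prop) (g : term) :=
  exists i j (h : i != j) a, g = Gen h a /\ P i j.
Definition isHg (g : term) :=
  exists i j (h : i != j) (h' : j != i) a b, g = Br (Gen h a) (Gen h' b).
Definition Bg g := isG (fun _ _ => True) g \/ isHg g.
Local Notation good := (cl Bg).
Local Notation sp := (cl (isG (fun _ _ => True))).

Lemma sp_good t : sp t -> good t.
Proof. by apply: cl_mono => g h; left. Qed.

Lemma isG_T P g : isG P g -> isG (fun _ _ => True) g.
Proof. by case=> i [j [h [a [-> _]]]]; exists i, j, h, a. Qed.

Lemma brGG p q r s (h1 : p != q) (h2 : r != s) x y : ~ (p = s /\ q = r) ->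
  cl (isG (fun a b => (a = p /\ b = s /\ q = r) \/ (a = r /\ b = q /\ p = s)))
     (Br (Gen h1 x) (Gen h2 y)).
Proof.
move=> hn; case: (eqVneq q r) => [eqr|nqr].
- have hps : p != s by apply/eqP => e; apply: hn.
  apply: cl_eqv (eqv_rel3 h1 h2 hps x y eqr) _.
  by apply: cl_P; exists p, s, hps, (x * y); split => //; left.
- case: (eqVneq p s) => [eps|nps].
  + have hrq : r != q by rewrite eq_sym.
    apply: cl_eqv (eqv_rel4 h1 h2 hrq x y eps) _.
    by apply: cl_S; apply: cl_P; exists r, q, hrq, (y * x); split => //; right.
  + exact: cl_eqv (eqv_rel2 h1 h2 x y nps nqr) (cl_Z _).
Qed.

Lemma c1 p q r s (h1 : p != q) (h2 : r != s) x y : good (Br (Gen h1 x) (Gen h2 y)).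
Proof.
case: (eqVneq p s) => [eps|nps]; case: (eqVneq q r) => [eqr|nqr].
- subst s r; apply: cl_P; right; by exists p, q, h1, h2, x, y.
all: apply: sp_good; apply: cl_mono (@isG_T _) _; apply: brGG; idx.
Qed.

Lemma good_BG x y : Bg x -> isG (fun _ _ => True) y -> (forall i j (h : i != j) (h' : j != i) a b k l (h2 : k != l) c,
   good (Br (Br (Gen h a) (Gen h' b)) (Gen h2 c))) -> good (Br x y).
Proof.
move=> [[i [j [h [a [-> _]]]]]|[i [j [h [h' [a [b ->]]]]]]] [k [l [h2 [c [-> _]]]]] H.
  exact: c1.
exact: H.
Qed.

Lemma br_G_gsp i j (hij : i != j) x (P : 'I_N -> 'I_N -> Prop) t :
  (forall a b, P a b -> ~ (i = b /\ j = a)) -> cl (isG P) t -> sp (Br (Gen hij x) t).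
Proof.
move=> hP; apply: (@cl_br _ _ _ _ (fun g => g = Gen hij x)); last exact: cl_P.
move=> _ y -> [k [l [h [a [-> Pkl]]]]].
by apply: cl_mono (@isG_T _) _; apply: brGG; apply: hP.
Qed.

Lemma br_gsp_G k l (hkl : k != l) y (P : 'I_N -> 'I_N -> Prop) t :
  (forall a b, P a b -> ~ (a = l /\ b = k)) -> cl (isG P) t -> sp (Br t (Gen hkl y)).
Proof.
move=> hP ht; apply: (@cl_br K A m n _ (fun g => g = Gen hkl y) _ _ _ _ ht); last exact: cl_P.
move=> x _ [i [j [h [a [-> Pij]]]]] ->.
by apply: cl_mono (@isG_T _) _; apply: brGG; apply: hP.
Qed.

Lemma leib1 P a b c d e f : hdeg a d -> hdeg b e -> hdeg c f ->
  cl P (Br a (Br b c)) -> cl P (Br b (Br a c)) -> cl P (Br (Br a b) c).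
Proof.
move=> ha hb hc h1 h2.
exact: cl_eqv (eqv_leibniz ha hb hc) (cl_A h1 (cl_S _ h2)).
Qed.

Lemma leib2 P a b c d e f : hdeg a d -> hdeg b e -> hdeg c f ->
  cl P (Br (Br a b) c) -> cl P (Br b (Br a c)) -> cl P (Br a (Br b c)).
Proof.
move=> ha hb hc h1 h2.
exact: cl_eqv (eqv_solve (eqv_leibniz ha hb hc)) (cl_A h1 (cl_S _ (cl_S _ h2))).
Qed.

Lemma hdegG i j (h : i != j) a : hdeg (Gen h a) (tau i j).
Proof. exact: hdeg_gen. Qed.

Lemma hdegH i j (h : i != j) (h' : j != i) a b :
  hdeg (Br (Gen h a) (Gen h' b)) (addb (tau i j) (tau j i)).
Proof. by apply: hdeg_br; apply: hdeg_gen. Qed.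

Lemma c2n i j (h : i != j) (h' : j != i) a b k l (hkl : k != l) c :
  ~ (k = i /\ l = j) -> ~ (k = j /\ l = i) ->
  sp (Br (Br (Gen h a) (Gen h' b)) (Gen hkl c)).
Proof.
move=> n1 n2.
apply: leib1 (hdegG h a) (hdegG h' b) (hdegG hkl c) _ _.
- apply: br_G_gsp; last by apply: (brGG h' hkl b c); idx.
  move=> x y; idx.
- apply: br_G_gsp; last by apply: (brGG h hkl a c); idx.
  move=> x y; idx.
Qed.

Lemma c3n i j (h : i != j) (h' : j != i) a b k l (hkl : k != l) c :
  ~ (k = i /\ l = j) -> ~ (k = j /\ l = i) ->
  sp (Br (Gen hkl c) (Br (Gen h a) (Gen h' b))).
Proof.
move=> n1 n2.
apply: leib2 (hdegG hkl c) (hdegG h a) (hdegG h' b) _ _.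
- apply: br_gsp_G; last by apply: (brGG hkl h c a); idx.
  move=> x y; idx.
- apply: br_G_gsp; last by apply: (brGG hkl h' c b); idx.
  move=> x y; idx.
Qed.

End Core.

Section Core2.
Variables (K : fieldType) (A : algType K) (m n : nat).
Hypothesis hmn : (3 <= m + n)%N.
Local Notation N := (m + n).
Local Notation term := (@Defs.term K A m n).
Local Notation eqv := (@Defs.eqv K A m n).
Local Notation tau := (@Defs.tau m n).
Local Notation Gen := (@Defs.Gen K A m n).
Local Notation Zero := (@Defs.Zero K A m n).
Local Notation cl := (@cl K A m n).
Local Notation Bg := (@Bg K A m n).
Local Notation isG := (@isG K A m n).
Local Notation good := (cl Bg).
Local Notation sp := (cl (isG (fun _ _ => True))).


Lemma split_gen k l (hkl : k != l) c r (hkr : k != r) (hrl : r != l) :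
  eqv (Gen hkl c) (Br (Gen hkr c) (Gen hrl 1)).
Proof.
have e := eqv_rel3 hkr hrl hkl c 1 (erefl r); rewrite mulr1 in e.
exact: eqv_sym e.
Qed.

Lemma c2 i j (h : i != j) (h' : j != i) a b k l (hkl : k != l) c :
  good (Br (Br (Gen h a) (Gen h' b)) (Gen hkl c)).
Proof.
case: (boolP (((k == i) && (l == j)) || ((k == j) && (l == i)))) => hs; last first.
  apply: sp_good; apply: c2n; move: hs; rewrite negb_or !negb_and => /andP[h1 h2];
  move=> [e1 e2]; subst; by rewrite !eqxx in h1 h2.
have [r [hrk hrl]] := third k l hmn.
have hkr : k != r by rewrite eq_sym.
apply: cl_eqv (eqv_br (eqv_refl _) (split_gen hkl c hkr hrl)) _.
apply: leib2 (hdegH h h' a b) (hdegG hkr c) (hdegG hrl 1) _ _.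
- apply: (@cl_br K A m n (isG (fun _ _ => True)) (fun g => g = Gen hrl 1)); last exact: cl_P.
    by move=> x _ [p [q [hpq [d [-> _]]]]] ->; exact: c1.
  by apply: c2n; case/orP: hs => /andP[/eqP e1 /eqP e2]; subst; idx.
- apply: (@cl_br K A m n (fun g => g = Gen hkr c) (isG (fun _ _ => True))).
  + by move=> _ y -> [p [q [hpq [d [-> _]]]]]; exact: c1.
  + exact: cl_P.
  + by apply: c2n; case/orP: hs => /andP[/eqP e1 /eqP e2]; subst; idx.
Qed.

Lemma c3 i j (h : i != j) (h' : j != i) a b k l (hkl : k != l) c :
  good (Br (Gen hkl c) (Br (Gen h a) (Gen h' b))).
Proof.
case: (boolP (((k == i) && (l == j)) || ((k == j) && (l == i)))) => hs; last first.
  apply: sp_good; apply: c3n; move: hs; rewrite negb_or !negb_and => /andP[h1 h2];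
  move=> [e1 e2]; subst; by rewrite !eqxx in h1 h2.
have [r [hrk hrl]] := third k l hmn.
have hkr : k != r by rewrite eq_sym.
apply: cl_eqv (eqv_br (split_gen hkl c hkr hrl) (eqv_refl _)) _.
apply: leib1 (hdegG hkr c) (hdegG hrl 1) (hdegH h h' a b) _ _.
- apply: (@cl_br K A m n (fun g => g = Gen hkr c) (isG (fun _ _ => True))).
  + by move=> _ y -> [p [q [hpq [d [-> _]]]]]; exact: c1.
  + exact: cl_P.
  + by apply: c3n; case/orP: hs => /andP[/eqP e1 /eqP e2]; subst; idx.
- apply: (@cl_br K A m n (fun g => g = Gen hrl 1) (isG (fun _ _ => True))).
  + by move=> _ y -> [p [q [hpq [d [-> _]]]]]; exact: c1.
  + exact: cl_P.
  + by apply: c3n; case/orP: hs => /andP[/eqP e1 /eqP e2]; subst; idx.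
Qed.

Lemma c4 i j (h : i != j) (h' : j != i) a b k l (hkl : k != l) (hlk : l != k) c d :
  good (Br (Br (Gen h a) (Gen h' b)) (Br (Gen hkl c) (Gen hlk d))).
Proof.
apply: leib2 (hdegH h h' a b) (hdegG hkl c) (hdegG hlk d) _ _.
- apply: (@cl_br K A m n Bg (fun g => g = Gen hlk d)).
  + move=> x _ [[p [q [hpq [e [-> _]]]]]|[p [q [hpq [hqp [e [f ->]]]]]]] ->.
      exact: c1.
    exact: c2.
  + exact: c2.
  + exact: cl_P.
- apply: (@cl_br K A m n (fun g => g = Gen hkl c) Bg).
  + move=> _ y -> [[p [q [hpq [e [-> _]]]]]|[p [q [hpq [hqp [e [f ->]]]]]]].
      exact: c1.
    exact: c3.
  + exact: cl_P.
  + exact: c2.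
Qed.

Lemma all_good (t : term) : good t.
Proof.
elim: t => [i j h a||t IHt s IHs|c t IHt|t IHt s IHs].
- by apply: cl_P; left; exists i, j, h, a.
- exact: cl_Z.
- exact: cl_A.
- exact: cl_S.
- apply: (cl_br _ IHt IHs).
  move=> x y [[p [q [hpq [e [-> _]]]]]|[p [q [hpq [hqp [e [f ->]]]]]]]
             [[p' [q' [hpq' [e' [-> _]]]]]|[p' [q' [hpq' [hqp' [e' [f' ->]]]]]]].
  + exact: c1.
  + exact: c3.
  + exact: c2.
  + exact: c4.
Qed.

End Core2.

Section NF.
Variables (K : fieldType) (A : algType K) (m n : nat).
Local Notation N := (m + n).
Local Notation term := (@Defs.term K A m n).
Local Notation eqv := (@Defs.eqv K A m n).
Local Notation Gen := (@Defs.Gen K A m n).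
Local Notation Zero := (@Defs.Zero K A m n).
Local Notation Emx := (@Defs.Emx K A m n).
Local Notation sc := (@Defs.scalemx K A m n).
Local Notation Bg := (@Bg K A m n).
Local Notation T := {p : 'I_N * 'I_N | p.1 != p.2}.

Definition Sl (L : seq T) (f : 'I_N -> 'I_N -> A) : term :=
  foldr (fun p acc => Add (Gen (proj2_sig p) (f (sval p).1 (sval p).2)) acc) Zero L.

Lemma S_zero_on L f : (forall p, p \in L -> f (sval p).1 (sval p).2 = 0) -> eqv (Sl L f) Zero.
Proof.
elim: L => [|p L IH] h /=; first exact: eqv_refl.
rewrite h ?mem_head //.
apply: eqv_trans (eqv_add (eqv_gen0 _ _) (IH _)) (eqv_add0 _).
by move=> q hq; apply: h; rewrite in_cons hq orbT.
Qed.

Lemma S_add L f g : eqv (Add (Sl L f) (Sl L g)) (Sl L (fun i j => f i j + g i j)).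
Proof.
elim: L => [|p L IH] /=; first exact: eqv_add0.
apply: eqv_trans (eqv_ACA _ _ _ _) _.
exact: eqv_add (eqv_sym (eqv_genD _ _ _)) IH.
Qed.

Lemma S_scale L f (c : K) : eqv (Scale c (Sl L f)) (Sl L (fun i j => c *: f i j)).
Proof.
elim: L => [|p L IH] /=; first exact: eqv_scaleZ.
apply: eqv_trans (eqv_scaleDr _ _ _) _.
exact: eqv_add (eqv_sym (eqv_genZ _ _ _)) IH.
Qed.

Lemma S_single L i j (h : i != j) a : uniq L ->
  eqv (Sl L (fun p q => if (p == i) && (q == j) then a else 0))
      (if (exist _ (i, j) h : T) \in L then Gen h a else Zero).
Proof.
elim: L => [|y L IH] /=; first by move=> _; exact: eqv_refl.
case/andP=> hy hu; rewrite in_cons.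
case: (eqVneq y ((exist _ (i, j) h : T))) => [ey|ny] /=.
- subst y.
  apply: eqv_trans (eqv_addr _ (IH hu)) _; rewrite (negbTE hy).
  change (eqv (Add (Gen h (if (i == i) && (j == j) then a else 0)) Zero) (Gen h a)).
  rewrite !eqxx /=; exact: (eqv_add0r (Gen h a)).
- have -> : ((sval y).1 == i) && ((sval y).2 == j) = false.
    apply/negbTE; apply: contra ny => /andP[/eqP e1 /eqP e2].
    by apply/eqP; apply: val_inj => /=; rewrite -e1 -e2 -surjective_pairing.
  apply: eqv_trans (eqv_addl _ (eqv_gen0 _ _)) _.
  apply: eqv_trans (eqv_add0 _) _; exact: IH.
Qed.

Definition LT := enum {: T}.

Lemma nf (c : term) : comb Bg c ->
  exists f h, inH h /\ eqv c (Add (Sl LT f) h).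
Proof.
elim=> {c}.
- move=> t [[i [j [h [a [-> _]]]]]|[i [j [h [h' [a [b ->]]]]]]].
  + exists (fun p q => if (p == i) && (q == j) then a else 0), Zero; split; first exact: inH_zero.
    apply: eqv_trans (eqv_sym (eqv_add0r _)) _; apply: eqv_addl.
    apply: eqv_sym; apply: eqv_trans (S_single _ _ (enum_uniq _)) _.
    by rewrite mem_enum; exact: eqv_refl.
  + exists (fun _ _ => 0), (Br (Gen h a) (Gen h' b)); split; first exact: inH_gen.
    apply: eqv_sym; apply: eqv_trans (eqv_addl _ (S_zero_on _)) (eqv_add0 _) => //.
- exists (fun _ _ => 0), Zero; split; first exact: inH_zero.
  apply: eqv_sym; apply: eqv_trans (eqv_addl _ (S_zero_on _)) (eqv_add0 _) => //.
- move=> t s _ [f [h [hh e]]] _ [g [h' [hh' e']]].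
  exists (fun i j => f i j + g i j), (Add h h'); split; first exact: inH_add.
  apply: eqv_trans (eqv_add e e') _; apply: eqv_trans (eqv_ACA _ _ _ _) _.
  exact: eqv_addl (S_add _ _ _).
- move=> c t _ [f [h [hh e]]].
  exists (fun i j => c *: f i j), (Scale c h); split; first exact: inH_scale.
  apply: eqv_trans (eqv_scale _ e) _; apply: eqv_trans (eqv_scaleDr _ _ _) _.
  exact: eqv_addl (S_scale _ _ _).
Qed.

Lemma psi_S L f : psi (Sl L f) = \sum_(p <- L) Emx (sval p).1 (sval p).2 (f (sval p).1 (sval p).2).
Proof.
elim: L => [|p L IH] /=; first by rewrite big_nil.
by rewrite big_cons IH.
Qed.

Lemma psi_S_entry f k l (hkl : k != l) : psi (Sl LT f) k l = f k l.
Proof.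
rewrite psi_S summxE /LT big_enum /= (bigD1 ((exist _ (k, l) hkl : T))) //= mxE !eqxx /=.
rewrite big1 ?addr0 // => p hp; rewrite mxE.
case: ifP => // /andP[/eqP e1 /eqP e2]; move: hp; case/negP.
by apply/eqP; apply: val_inj => /=; rewrite e1 e2 -surjective_pairing.
Qed.

Lemma psi_H_off (h : term) k l : inH h -> k != l -> psi h k l = 0.
Proof.
move=> hh hkl; elim: hh => /=.
- move=> i j hij hji a b.
  rewrite (sbrE (@homog_Emx _ _ _ _ i j a) (@homog_Emx _ _ _ _ j i b)) !EmxM !eqxx.
  rewrite !mxE.
  case: (eqVneq k i) => [eki|_]; case: (eqVneq l i) => [eli|_];
  case: (eqVneq k j) => [ekj|_]; case: (eqVneq l j) => [elj|_];
  rewrite /= ?scaler0 ?subr0 //; subst; by rewrite eqxx in hkl.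
- by rewrite mxE.
- by move=> t s _ h1 _ h2; rewrite mxE h1 h2 addr0.
- by move=> c t _ h1; rewrite scalemxE h1 scaler0.
Qed.

End NF.

Theorem lemma3p3 (K : fieldType) (A : algType K) (m n : nat)
  (hK2 : (2%:R : K) != 0) (hK3 : (3%:R : K) != 0) (hmn : (3 <= m + n)%N) :
  forall t : term A m n, psi t = 0 ->
    exists h : term A m n, inH h /\ eqv t h.
Proof.
move=> t ht.
have [c [hc e]] := all_good hmn t.
have [f [h [hh e2]]] := nf hc.
have e3 := eqv_trans e e2.
have hp := psi_eqv e3.
have f0 : forall k l, k != l -> f k l = 0.
  move=> k l hkl; move/matrixP: hp => /(_ k l).
  by rewrite ht /= [LHS]mxE [RHS]mxE psi_S_entry // (psi_H_off hh hkl) addr0 => <-.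
exists h; split => //.
apply: eqv_trans e3 _; apply: eqv_trans (eqv_addl _ (S_zero_on _)) (eqv_add0 _).
by move=> p _; apply: f0; exact: valP p.
Qed.
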